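(* Let \(A\) be a geometrically fast set of positive bumps with a fixed marking witnessing this. If \(\mathtt{w}\) is an \(A\)-word and \(x\in J(\mathtt{w})\), then \(\mathtt{w}\) is locally reduced at \(x\) if and only if \(\mathtt{w}\) is freely reduced and \(\operatorname{dest}(a)\subseteq\operatorname{supt}(b)\) whenever \(\mathtt{ab}\) are consecutive symbols in \(\mathtt{w}\). In particular, if \(\mathtt{w}\) is freely reduced and locally reduced at some element of \(J(\mathtt{w})\), then \(\mathtt{w}\) is locally reduced at every element of \(J(\mathtt{w})\).
   Context: \(I=[0,1]\); homeomorphisms act on the right. A positive bump is an element of \(\operatorname{Homeo}_+(I)\) whose support \(\{t:ta\neq t\}\) is a single open interval \((x,y)\) on which \(ta>t\); \(x\), \(y\) are its left and right transition points. \(A\) is geometrically proper if no point is a left transition point of two distinct elements, nor a right transition point of two distinct elements. A marking assigns each \(a\in A\) a marker \(t\in\operatorname{supt}(a)\); for \(a\) with support \((x,y)\), \(\operatorname{src}(a)=(x,t)\), \(\operatorname{dest}(a)=[ta,y)\), \(\operatorname{src}(a^{-1})=\operatorname{dest}(a)\), \(\operatorname{dest}(a^{-1})=\operatorname{src}(a)\). \(A\) is geometrically fast if geometrically proper and the marking makes these feet pairwise disjoint. \(A^{\pm}=A\cup A^{-1}\); \(\operatorname{supt}(a^{-1})=\operatorname{supt}(a)\). An \(A\)-word is a finite string over \(A^{\pm}\), with evaluation \(w\). \(\mathtt{w}\) is locally reduced at \(t\) if it is freely reduced and for every prefix \(\mathtt{ua}\) (\(a\in A^\pm\)), \(tua\neq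 tu\). For a nonempty word with first symbol \(a\), \(J(\mathtt{w}):=\operatorname{supt}(a)\setminus\operatorname{src}(a)\). *)

(* Defs.v *)
From Stdlib Require Import Reals List.
Import ListNotations.
Open Scope R_scope.

Definition inI (t : R) : Prop := 0 <= t <= 1.

Definition homeo_plus (f finv : R -> R) : Prop :=
  (forall t, inI t -> inI (f t)) /\
  (forall t, inI t -> inI (finv t)) /\
  (forall t, inI t -> finv (f t) = t) /\
  (forall t, inI t -> f (finv t) = t) /\
  (forall s t, inI s -> inI t -> s < t -> f s < f t) /\
  (forall t, inI t -> forall eps, 0 < eps ->
     exists delta, 0 < delta /\
       forall s, inI s -> Rabs (s - t) < delta -> Rabs (f s - f t) < eps).

(* support {t in I : t f <> t} (homeomorphisms act on the right: t f = f t) *)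
Definition supt (f : R -> R) (t : R) : Prop := inI t /\ f t <> t.

Definition pos_bump_at (f : R -> R) (x y : R) : Prop :=
  0 <= x /\ x < y /\ y <= 1 /\
  (forall t, supt f t <-> x < t < y) /\
  (forall t, x < t < y -> f t > t).

Definition left_tp (f : R -> R) (x : R) : Prop := exists y, pos_bump_at f x y.
Definition right_tp (f : R -> R) (y : R) : Prop := exists x, pos_bump_at f x y.

(* A set of positive bumps, indexed by the type A: element a is the
   homeomorphism f a, with inverse finv a. *)
Definition bump_set (A : Type) (f finv : A -> R -> R) : Prop :=
  forall a, homeo_plus (f a) (finv a) /\ exists x y, pos_bump_at (f a) x y.

Definition geom_proper (A : Type) (f : A -> R -> R) : Prop :=
  (forall a b x, left_tp (f a) x -> left_tp (f b) x -> a = b) /\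
  (forall a b y, right_tp (f a) y -> right_tp (f b) y -> a = b).

(* Symbols of A^{+-}: (a, true) = a, (a, false) = a^{-1}. *)
Definition sym (A : Type) : Type := (A * bool)%type.

(* Feet w.r.t. a marking m : A -> R.  For a with support (x,y):
   src(a) = (x, m a),  dest(a) = [ (m a) a, y ),
   src(a^-1) = dest(a), dest(a^-1) = src(a). *)
Definition src_pos {A : Type} (f : A -> R -> R) (m : A -> R) (a : A) (t : R) : Prop :=
  supt (f a) t /\ t < m a.
Definition dest_pos {A : Type} (f : A -> R -> R) (m : A -> R) (a : A) (t : R) : Prop :=
  supt (f a) t /\ f a (m a) <= t.

Definition src {A : Type} (f : A -> R -> R) (m : A -> R) (c : sym A) : R -> Prop :=
  if snd c then src_pos f m (fst c) else dest_pos f m (fst c).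
Definition dest {A : Type} (f : A -> R -> R) (m : A -> R) (c : sym A) : R -> Prop :=
  if snd c then dest_pos f m (fst c) else src_pos f m (fst c).

(* supt(a^{-1}) = supt(a) *)
Definition supt_sym {A : Type} (f : A -> R -> R) (c : sym A) : R -> Prop :=
  supt (f (fst c)).

Definition marking (A : Type) (f : A -> R -> R) (m : A -> R) : Prop :=
  forall a, supt (f a) (m a).

(* The feet {src(a), dest(a) : a in A^{+-}} = {src_pos a, dest_pos a : a in A}
   are pairwise disjoint: distinct feet (a,s) <> (b,s') have empty intersection,
   where (a,true) denotes src(a) and (a,false) denotes dest(a). *)
Definition foot {A : Type} (f : A -> R -> R) (m : A -> R) (a : A) (s : bool) : R -> Prop :=
  if s then src_pos f m a else dest_pos f m a.

Definition geom_fast_marking (A : Type) (f : A -> R -> R) (m : A -> R) : Prop :=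
  geom_proper A f /\ marking A f m /\
  (forall a b s s' t, (a, s) <> (b, s') -> foot f m a s t -> foot f m b s' t -> False).

Definition act {A : Type} (f finv : A -> R -> R) (t : R) (c : sym A) : R :=
  if snd c then f (fst c) t else finv (fst c) t.

Definition eval_at {A : Type} (f finv : A -> R -> R) (t : R) (w : list (sym A)) : R :=
  fold_left (act f finv) w t.

Definition inv_sym {A : Type} (c : sym A) : sym A := (fst c, negb (snd c)).

Definition freely_reduced {A : Type} (w : list (sym A)) : Prop :=
  forall u v c, w <> u ++ c :: inv_sym c :: v.

Definition locally_reduced {A : Type} (f finv : A -> R -> R) (w : list (sym A)) (t : R) : Prop :=
  freely_reduced w /\
  forall u c v, w = u ++ c :: v ->
    act f finv (eval_at f finv t u) c <> eval_at f finv t u.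

(* J(w) = supt(a) \ src(a), a the first symbol of w (empty for the empty word,
   for which J is undefined). *)
Definition Jset {A : Type} (f : A -> R -> R) (m : A -> R) (w : list (sym A)) (t : R) : Prop :=
  match w with
  | [] => False
  | c :: _ => supt_sym f c t /\ ~ src f m c t
  end.

(* Main.v *)
Require Import Defs.
From Stdlib Require Import Reals List Lra Classical.
Import ListNotations.
Open Scope R_scope.

Section S.
Variables (A : Type) (f finv : A -> R -> R) (m : A -> R).
Hypothesis Hbump : bump_set A f finv.
Hypothesis Hfast : geom_fast_marking A f m.

Lemma mono a s t : inI s -> inI t -> s < t -> f a s < f a t.
Proof. destruct (Hbump a) as [[_ [_ [_ [_ [H _]]]]] _]; auto. Qed.

Lemma mono_le a s t : inI s -> inI t -> s <= t -> f a s <= f a t.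
Proof. intros Hs Ht [H|H]. left; apply mono; auto. subst; lra. Qed.

Lemma inj a s t : inI s -> inI t -> f a s = f a t -> s = t.
Proof.
  intros Hs Ht E. destruct (total_order_T s t) as [[H|H]|H]; auto.
  - pose proof (mono a s t Hs Ht H); lra.
  - pose proof (mono a t s Ht Hs H); lra.
Qed.

Lemma f_inI a t : inI t -> inI (f a t).
Proof. destruct (Hbump a) as [[H _] _]; auto. Qed.
Lemma finv_inI a t : inI t -> inI (finv a t).
Proof. destruct (Hbump a) as [[_ [H _]] _]; auto. Qed.
Lemma finv_f a t : inI t -> finv a (f a t) = t.
Proof. destruct (Hbump a) as [[_ [_ [H _]]] _]; auto. Qed.
Lemma f_finv a t : inI t -> f a (finv a t) = t.
Proof. destruct (Hbump a) as [[_ [_ [_ [H _]]]] _]; auto. Qed.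

Lemma f_supt a t : supt (f a) t -> supt (f a) (f a t).
Proof.
  intros [HI Hne]. split. apply f_inI; auto.
  intro E. apply Hne. apply (inj a); auto. apply f_inI; auto.
Qed.

Lemma finv_supt a t : supt (f a) t -> supt (f a) (finv a t).
Proof.
  intros [HI Hne]. split. apply finv_inI; auto.
  intro E. apply Hne. pose proof (f_finv a t HI) as F. rewrite E in F.
  assert (G : f a (finv a t) = f a t) by (rewrite F; reflexivity).
  rewrite <- G. exact (f_finv a t HI).
Qed.

Lemma act_ne c p : supt_sym f c p -> act f finv p c <> p.
Proof.
  destruct c as [a []]; unfold supt_sym, act; simpl; intros [HI Hne]; auto.
  intro E. apply Hne. pose proof (f_finv a p HI) as F. rewrite E in F. exact F.
Qed.

Lemma act_fix c p : inI p -> ~ supt_sym f c p -> act f finv p c = p.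
Proof.
  intros HI Hn. assert (E : f (fst c) p = p).
  { apply NNPP; intro H; apply Hn; split; auto. }
  destruct c as [a []]; unfold act; simpl in *; auto.
  pose proof (finv_f a p HI) as F. rewrite E in F. exact F.
Qed.

Lemma act_dest c p : supt_sym f c p -> ~ src f m c p -> dest f m c (act f finv p c).
Proof.
  destruct Hfast as [_ [Hm _]].
  destruct c as [a []]; unfold supt_sym, src, dest, act, src_pos, dest_pos; simpl;
    intros Hs Hn.
  - split. apply f_supt; auto.
    apply mono_le. apply (Hm a). apply Hs.
    apply Rnot_lt_le. intro; apply Hn; auto.
  - split. apply finv_supt; auto.
    apply Rnot_le_lt. intro H.
    assert (H2 : f a (m a) <= p).
    { assert (HpI : inI p) by apply Hs.
      pose proof (mono_le a (m a) (finv a p) (proj1 (Hm a)) (finv_inI a p HpI) H) as M.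
      rewrite (f_finv a p HpI) in M. exact M. }
    apply Hn; auto.
Qed.

Lemma dest_supt c t : dest f m c t -> supt_sym f c t.
Proof. destruct c as [a []]; unfold dest, supt_sym, src_pos, dest_pos; simpl; tauto. Qed.

Lemma src_foot c : src f m c = foot f m (fst c) (snd c).
Proof. destruct c as [a []]; reflexivity. Qed.
Lemma dest_foot c : dest f m c = foot f m (fst c) (negb (snd c)).
Proof. destruct c as [a []]; reflexivity. Qed.

Lemma src_dest_disj c e t : e <> inv_sym c -> dest f m c t -> src f m e t -> False.
Proof.
  destruct Hfast as [_ [_ Hd]]. intros He H1 H2.
  rewrite dest_foot in H1. rewrite src_foot in H2.
  apply (Hd (fst c) (fst e) (negb (snd c)) (snd e) t); auto.
  intro H. apply He. destruct e as [e1 e2]. simpl in H. unfold inv_sym. rewrite H. reflexivity.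
Qed.

Lemma foot_conv a s t1 t2 q : foot f m a s t1 -> foot f m a s t2 -> t1 <= q <= t2 -> foot f m a s q.
Proof.
  destruct (Hbump a) as [_ [x [y [H0 [Hxy [Hy1 [Hiff _]]]]]]].
  assert (Hs : forall t, supt (f a) t -> x < t < y) by (intro t; apply Hiff).
  assert (Hs2 : forall t, x < t < y -> supt (f a) t) by (intro t; apply Hiff).
  destruct s; unfold foot, src_pos, dest_pos; intros [S1 L1] [S2 L2] Hq;
    apply Hs in S1; apply Hs in S2; split; try apply Hs2; lra.
Qed.

Lemma dest_sub c d p : d <> inv_sym c -> dest f m c p -> supt_sym f d p ->
  forall t, dest f m c t -> supt_sym f d t.
Proof.
  intros Hcd Hp Hpd t Ht.
  destruct (classic (fst c = fst d)) as [E|NE].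
  - destruct c as [a s], d as [a' s']; simpl in E; subst a'.
    destruct s, s'.
    + apply dest_supt in Ht; auto.
    + exfalso; apply Hcd; reflexivity.
    + exfalso; apply Hcd; reflexivity.
    + apply dest_supt in Ht; auto.
  - destruct Hfast as [_ [Hm Hd]].
    assert (D : forall b q, dest f m c q -> foot f m (fst d) b q -> False).
    { intros b q H1 H2. rewrite dest_foot in H1.
      apply (Hd (fst c) (fst d) (negb (snd c)) b q); auto.
      intro H; inversion H; auto. }
    rewrite dest_foot in Ht, Hp.
    assert (HtI : inI t).
    { rewrite <- dest_foot in Ht. apply dest_supt in Ht. apply Ht. }
    unfold supt_sym in *.
    destruct (Hbump (fst d)) as [_ [x [y [H0 [Hxy [Hy1 [Hiff _]]]]]]].
    assert (Hmd := Hm (fst d)). apply Hiff in Hmd.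
    assert (Hfmd := f_supt _ _ (Hm (fst d))). apply Hiff in Hfmd.
    apply Hiff in Hpd.
    apply Hiff. apply NNPP; intro Hn.
    destruct (Rle_or_lt t x) as [Hl|Hl].
    + set (q := (x + Rmin p (m (fst d))) / 2).
      assert (Hq1 : x < q < p).
      { unfold q, Rmin; destruct (Rle_dec p (m (fst d))); lra. }
      assert (Hq2 : q < m (fst d)).
      { unfold q, Rmin; destruct (Rle_dec p (m (fst d))); lra. }
      apply (D true q).
      * rewrite dest_foot. apply (foot_conv _ _ t p); auto. lra.
      * unfold foot, src_pos. split; auto. apply Hiff; lra.
    + assert (Hg : y <= t) by lra.
      set (q := (Rmax p (f (fst d) (m (fst d))) + y) / 2).
      assert (Hq1 : p < q < y /\ f (fst d) (m (fst d)) <= q).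
      { unfold q, Rmax; destruct (Rle_dec p (f (fst d) (m (fst d)))); lra. }
      apply (D false q).
      * rewrite dest_foot. apply (foot_conv _ _ p t); auto. lra.
      * unfold foot, dest_pos. split. apply Hiff; lra. lra.
Qed.

Lemma fr_ne (w u : list (sym A)) c e v : freely_reduced w -> w = u ++ c :: e :: v -> e <> inv_sym c.
Proof. intros Hf E He. subst. apply (Hf u v c). reflexivity. Qed.

Lemma eval_snoc x u c : eval_at f finv x (u ++ [c]) = act f finv (eval_at f finv x u) c.
Proof. unfold eval_at. rewrite fold_left_app. reflexivity. Qed.

Lemma fwd w x : Jset f m w x -> freely_reduced w ->
  (forall u c d v, w = u ++ c :: d :: v -> forall t, dest f m c t -> supt_sym f d t) ->
  forall u e v, w = u ++ e :: v ->
    supt_sym f e (eval_at f finv x u) /\ ~ src f m e (eval_at f finv x u).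
Proof.
  intros HJ Hfr Hch u. induction u as [|c u IH] using rev_ind; intros e v E.
  - simpl in E. subst w. simpl in HJ. exact HJ.
  - rewrite <- app_assoc in E. simpl in E.
    destruct (IH c (e :: v) E) as [H1 H2].
    pose proof (act_dest _ _ H1 H2) as Hd.
    rewrite eval_snoc.
    split.
    + apply (Hch u c e v E _ Hd).
    + intro Hs. apply (src_dest_disj c e _ (fr_ne _ _ _ _ _ Hfr E) Hd Hs).
Qed.

Lemma bwd w x : Jset f m w x -> locally_reduced f finv w x ->
  forall u e v, w = u ++ e :: v ->
    supt_sym f e (eval_at f finv x u) /\ ~ src f m e (eval_at f finv x u).
Proof.
  intros HJ [Hfr Hlr] u. induction u as [|c u IH] using rev_ind; intros e v E.
  - simpl in E. subst w. simpl in HJ. exact HJ.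
  - pose proof E as E0.
    rewrite <- app_assoc in E. simpl in E.
    destruct (IH c (e :: v) E) as [H1 H2].
    pose proof (act_dest _ _ H1 H2) as Hd.
    rewrite eval_snoc.
    split.
    + apply NNPP; intro Hn.
      apply (Hlr _ _ _ E0). rewrite eval_snoc.
      apply act_fix; auto.
      apply dest_supt in Hd. apply Hd.
    + intro Hs. apply (src_dest_disj c e _ (fr_ne _ _ _ _ _ Hfr E) Hd Hs).
Qed.

Lemma part1 w x : Jset f m w x ->
     (locally_reduced f finv w x <->
      (freely_reduced w /\
       forall u c d v, w = u ++ c :: d :: v ->
         forall t, dest f m c t -> supt_sym f d t)).
Proof.
  intro HJ. split.
  - intro HL. split. apply HL.
    intros u c d v E t Ht.
    assert (E1 : w = u ++ c :: (d :: v)) by exact E.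
    destruct (bwd w x HJ HL u c (d :: v) E1) as [H1 H2].
    pose proof (act_dest _ _ H1 H2) as Hd.
    assert (E2 : w = (u ++ [c]) ++ d :: v) by (rewrite <- app_assoc; exact E).
    destruct (bwd w x HJ HL _ d v E2) as [H3 _].
    rewrite eval_snoc in H3.
    apply (dest_sub c d _ (fr_ne _ _ _ _ _ (proj1 HL) E) Hd H3 t Ht).
  - intros [Hfr Hch]. split; auto.
    intros u c v E.
    destruct (fwd w x HJ Hfr Hch u c v E) as [H1 _].
    apply act_ne; auto.
Qed.

End S.

Theorem lemma5p3 (A : Type) (f finv : A -> R -> R) (m : A -> R)
  (Hbump : bump_set A f finv) (Hfast : geom_fast_marking A f m) :
  (forall (w : list (sym A)) (x : R), Jset f m w x ->
     (locally_reduced f finv w x <->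
      (freely_reduced w /\
       forall u c d v, w = u ++ c :: d :: v ->
         forall t, dest f m c t -> supt_sym f d t))) /\
  (forall (w : list (sym A)),
     freely_reduced w ->
     (exists x, Jset f m w x /\ locally_reduced f finv w x) ->
     forall y, Jset f m w y -> locally_reduced f finv w y).
Proof.
  split.
  - intros w x HJ. apply part1; auto.
  - intros w Hfr [x [HJ HL]] y HJy.
    apply (part1 A f finv m Hbump Hfast w y HJy).
    apply (part1 A f finv m Hbump Hfast w x HJ). exact HL.
Qed.
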